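(* Let $k\geq 3$, $\chi\geq 2$, $t\geq k-1$ and $n\geq 3(k-1)$ be integers with $n\equiv 1\pmod{k-1}$. Let $H$ be the $k$-graph on vertex set $A_1\sqcup\dots\sqcup A_\chi$, where $|A_i|>(\chi-1)(k-2)+\tau(k-1,t)$ for all $i\in[\chi-1]$ and $|A_\chi|=t$, whose edges are all $k$-subsets $e$ of the vertex set such that $|e\cap A_i|=k-1$ for some $i\in[\chi]$. Then $R(P^{(k)}_{n,1},H)\geq (\chi-1)(n-1)+\tau(k-1,t)-2k+3$.
   Context: A $k$-graph is a $k$-uniform hypergraph. $R(G,H)$ is the least $N$ such that every red/blue colouring of the edges of $K^{(k)}_N$ contains a red copy of $G$ or a blue copy of $H$. The loose path $P^{(k)}_{n,1}$ ($n=q(k-1)+1$) has vertices $v_1,\dots,v_n$ and edges $\{v_{(i-1)(k-1)+1},\dots,v_{i(k-1)+1}\}$, $i\in[q]$. For integers $j,\alpha\ge1$, $\tau(j,\alpha)$ is the largest $N$ such that some $j$-uniform hypergraph on $N$ vertices has independence number less than $\alpha$ and no two edges meeting in exactly one vertex. *)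

(* Defs.v *)
From mathcomp Require Import all_boot.
Set Implicit Arguments. Unset Strict Implicit. Unset Printing Implicit Defensive.

Definition uniform (V : finType) (k : nat) (E : {set {set V}}) : Prop :=
  forall e, e \in E -> #|e| = k.

Definition indep (V : finType) (E : {set {set V}}) (S : {set V}) : bool :=
  [forall e in E, ~~ (e \subset S)].

Definition indep_num (V : finType) (E : {set {set V}}) : nat :=
  \max_(S : {set V} | indep E S) #|S|.

Definition no_one_intersection (V : finType) (E : {set {set V}}) : Prop :=
  forall e1 e2, e1 \in E -> e2 \in E -> e1 != e2 -> #|e1 :&: e2| != 1.

Definition tau_admissible (j alpha N : nat) : Prop :=
  exists E : {set {set 'I_N}},
    [/\ uniform j E, indep_num E < alpha & no_one_intersection E].

Definition is_tau (j alpha T : nat) : Prop :=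
  tau_admissible j alpha T /\ forall N, tau_admissible j alpha N -> N <= T.

(* Loose path P^{(k)}_{n,1} on vertices 'I_n (0-indexed): edges
   {i(k-1), ..., i(k-1)+(k-1)} for i < q = (n-1)/(k-1). *)
Definition loose_path (k n : nat) : {set {set 'I_n}} :=
  [set [set v : 'I_n | (i * (k-1) <= v) && (v <= i * (k-1) + (k-1))]
  | i : 'I_((n-1) %/ (k-1))].

(* The k-graph H: vertex set A_0 ⊔ ... ⊔ A_{chi-1} with |A_i| = a i,
   edges = all k-subsets meeting some A_i in exactly k-1 vertices. *)
Definition part_vertex (chi : nat) (a : 'I_chi -> nat) := {i : 'I_chi & 'I_(a i)}.

Definition part (chi : nat) (a : 'I_chi -> nat) (i : 'I_chi)
  : {set part_vertex a} := [set x : part_vertex a | tag x == i].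

Definition H_graph (k chi : nat) (a : 'I_chi -> nat) : {set {set part_vertex a}} :=
  [set e : {set part_vertex a} | (#|e| == k) &&
     [exists i : 'I_chi, #|e :&: part a i| == k - 1]].

(* Every red/blue colouring c of the k-subsets of 'I_N (c e = true: red)
   contains a red copy of G or a blue copy of Hh. *)
Definition ramsey_arrows (VG VH : finType) (G : {set {set VG}}) (Hh : {set {set VH}})
  (N : nat) : Prop :=
  forall c : {set 'I_N} -> bool,
    (exists f : VG -> 'I_N, injective f /\ forall e, e \in G -> c (f @: e) = true)
    \/ (exists g : VH -> 'I_N, injective g /\ forall e, e \in Hh -> c (g @: e) = false).

(* Main.v *)
Require Import Defs.
From mathcomp Require Import all_boot.
From mathcomp Require Import zify.
Set Implicit Arguments. Unset Strict Implicit. Unset Printing Implicit Defensive.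

Lemma card_bigcup_leq (T : finType) m (F : 'I_m -> {set T}) :
  #|\bigcup_(j < m) F j| <= \sum_(j < m) #|F j|.
Proof.
elim/big_rec2: _ => [|j A s _ IH]; first by rewrite cards0.
rewrite cardsU; lia.
Qed.

Lemma exists_subset (T : finType) (A : {set T}) m :
  m <= #|A| -> exists2 S : {set T}, S \subset A & #|S| = m.
Proof.
elim: m => [|m IH] H; first by exists set0; [exact: sub0set | exact: cards0].
case: (IH (ltnW H)) => S SA cS.
have /set0Pn [x /setDP [xA xS]] : A :\: S != set0.
  apply/negP; rewrite setD_eq0 => /subset_leq_card; lia.
exists (x |: S); first by rewrite subUset sub1set xA SA.
by rewrite cardsU1 xS cS.
Qed.

Section Constr.
Variables (k chi n T N : nat) (E : {set {set 'I_T}}).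
Hypotheses (Hk : 3 <= k) (Hchi : 2 <= chi) (Hn : 3 * (k - 1) <= n)
  (HN : N <= (chi - 2) * (n - 1) + (n - 2 * k + 1) + T)
  (HEu : uniform (k - 1) E) (HE1 : no_one_intersection E).

Local Notation base := ((chi - 2) * (n - 1)).
Local Notation wb := ((chi - 2) * (n - 1) + (n - 2 * k + 1)).

Definition inC (j v : nat) := (j * (n - 1) <= v) && (v < j * (n - 1) + (n - 1)).
Definition inB (v : nat) := (base <= v) && (v < wb).
Definition inW (v : nat) := wb <= v.
Definition wset (S : {set 'I_N}) : {set 'I_T} :=
  [set w : 'I_T | [exists v in S, nat_of_ord v == wb + w]].
Definition type1 (e : {set 'I_N}) := [exists j : 'I_(chi - 2), [forall v in e, inC j v]].
Definition type2 (e : {set 'I_N}) := [forall v in e, inB v].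
Definition type3 (e : {set 'I_N}) :=
  [exists b in e, [&& inB b, [forall v in e :\ b, inW v] & wset (e :\ b) \in E]].
Definition red (e : {set 'I_N}) := [|| type1 e, type2 e | type3 e].
Definition cid (v : nat) := if v < base then v %/ (n - 1) else chi - 2.

Lemma inC_lt j v : j < chi - 2 -> inC j v -> v < base.
Proof.
move=> Hj /andP [_ H].
have : j.+1 * (n - 1) <= (chi - 2) * (n - 1) by apply: leq_mul.
rewrite mulSn; lia.
Qed.

Lemma inC_cid j v : j < chi - 2 -> inC j v -> cid v = j.
Proof.
move=> Hj H; rewrite /cid (inC_lt Hj H).
case/andP: H => H1 H2.
rewrite -(subnKC H1) divnMDl ?divn_small; lia.
Qed.

Lemma inB_notW v : inB v -> ~~ inW v.
Proof. by rewrite /inB /inW -ltnNge => /andP []. Qed.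

Lemma inC_notW j v : j < chi - 2 -> inC j v -> ~~ inW v.
Proof. move=> Hj /(inC_lt Hj); rewrite /inW -ltnNge => H; exact: (leq_trans H (leq_addr _ _)). Qed.

Lemma inW_lt (v : 'I_N) : inW v -> v - wb < T.
Proof. move: (ltn_ord v) HN; rewrite /inW; clear; lia. Qed.

Lemma red_cid e (u v : 'I_N) : red e -> u \in e -> v \in e -> cid u = cid v.
Proof.
case/or3P.
- case/existsP => j /forallP H Hu Hv.
  have := H u; have := H v; rewrite Hu Hv /= => Hv' Hu'.
  by rewrite (inC_cid (ltn_ord j) Hu') (inC_cid (ltn_ord j) Hv').
- move/forallP => H Hu Hv.
  move: (H u) (H v); rewrite Hu Hv /inB /cid /= => /andP [h1 _] /andP [h2 _].
  by rewrite !ltnNge h1 h2.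
- case/existsP => b /andP [Hb /and3P [HbB /forallP HW _]].
  have geb (w : 'I_N) : w \in e -> base <= w.
    move=> Hw; case: (eqVneq w b) => [->|ne]; first by case/andP: HbB.
    have := HW w; rewrite in_setD1 ne Hw /= /inW; lia.
  move=> Hu Hv; by rewrite /cid !ltnNge geb ?geb.
Qed.

Lemma no_red_path (Hmod : n = 1 %[mod k - 1]) (f : 'I_n -> 'I_N) : injective f ->
  (forall e, e \in loose_path k n -> red (f @: e)) -> False.
Proof.
move=> finj Hf.
have K2 : 2 <= k - 1 by lia.
have [q Hq] : exists q, n = q * (k - 1) + 1.
  exists (n %/ (k - 1)); rewrite {1}(divn_eq n (k - 1)); congr (_ + _).
  rewrite Hmod modn_small //; lia.
clear Hmod.
have q3 : 3 <= q by clear - Hq Hn K2; nia.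
have q3K : 3 * (k - 1) <= q * (k - 1) by apply: leq_mul.
have Hq' : (n - 1) %/ (k - 1) = q by rewrite Hq addnK mulnK //; lia.
have n0 : 0 < n by lia.
pose x0 : 'I_n := Ordinal n0.
pose fv (x : nat) := nat_of_ord (f (insubd x0 x)).
have fv_inj : forall x y, x < n -> y < n -> fv x = fv y -> x = y.
  move=> x y Hx Hy /val_inj /finj /(congr1 val).
  by rewrite !val_insubd Hx Hy.
pose P i := [set v : 'I_n | (i * (k - 1) <= v) && (v <= i * (k - 1) + (k - 1))].
have redP : forall i, i < q -> red (f @: P i).
  move=> i Hi; apply: Hf; rewrite /loose_path.
  have Hi' : i < (n - 1) %/ (k - 1) by rewrite Hq'.
  by apply/imsetP; exists (Ordinal Hi').
clear Hq'.
have memP : forall i x, x < n ->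
    (insubd x0 x \in P i) = (i * (k - 1) <= x <= i * (k - 1) + (k - 1)).
  by move=> i x Hx; rewrite inE val_insubd Hx.
have cidall : forall x, x < n -> cid (fv x) = cid (fv 0).
  elim => [//|m IH] Hm; rewrite -IH; last lia.
  have Hi : m %/ (k - 1) < q by rewrite ltn_divLR; lia.
  have h1 := leq_divM m (k - 1).
  have h2 := ltn_ceil m (ltnW K2); rewrite mulSn in h2.
  apply: (red_cid (redP _ Hi)); apply: imset_f; rewrite memP; clear - h1 h2 Hm; lia.

have cid0 : forall v, v < base -> v %/ (n - 1) < chi - 2.
  by move=> v Hv; rewrite ltn_divLR; lia.
case: (ltnP (fv 0) base) => H0.
- (* everything in one full cluster *)
  have [c0 Hc0] : exists c0, fv 0 %/ (n - 1) = c0 by eexists.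
  have Hall : forall x, x < n -> c0 * (n - 1) <= fv x < c0 * (n - 1) + (n - 1).
    move=> x Hx; have := cidall x Hx; rewrite /cid H0 Hc0.
    case: ifP => Hlt.
    + move=> Ex; have := leq_divM (fv x) (n - 1).
      have := ltn_ceil (fv x) (_ : 0 < n - 1); rewrite mulSn Ex.
      move=> /(_ ltac:(lia)); clear Ex; lia.
    + have := cid0 _ H0; rewrite Hc0; lia.
  have U : uniq (map fv (iota 0 n)).
    rewrite map_inj_in_uniq ?iota_uniq //.
    move=> x y; rewrite !mem_iota => Hx Hy; apply: fv_inj; lia.
  have : size (map fv (iota 0 n)) <= size (iota (c0 * (n - 1)) (n - 1)).
    apply: uniq_leq_size U _.
    move=> v /mapP [x]; rewrite mem_iota => Hx ->; rewrite mem_iota.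
    have := Hall x; lia.
  rewrite size_map !size_iota; lia.
- have Hge : forall x, x < n -> base <= fv x.
    move=> x Hx; have := cidall x Hx; rewrite {2}/cid ltnNge H0 /= /cid.
    case: ifP => Hlt; first by have := cid0 _ Hlt; lia.
    by rewrite leqNgt Hlt.
  have nbl : forall i1 i2 s, i1 < q -> i2 < q -> s < n ->
      insubd x0 s \in P i1 -> insubd x0 s \in P i2 ->
      (forall y, y \in P i1 -> y \in P i2 -> y = insubd x0 s) ->
      type3 (f @: P i1) -> forall b, b \in f @: P i1 -> inB b ->
      [forall v in (f @: P i1) :\ b, inW v] -> wset ((f @: P i1) :\ b) \in E ->
      b != f (insubd x0 s) -> False.
    move=> i1 i2 s Hi1 Hi2 Hs s1 s2 Huniq _ b Hb HbB HW1 HE1' Hbs.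
    set e1 := f @: P i1; set e2 := f @: P i2; set xs := f (insubd x0 s).
    have xs1 : xs \in e1 by apply: imset_f.
    have xs2 : xs \in e2 by apply: imset_f.
    have xsW : inW xs.
      by have := forallP HW1 xs; rewrite in_setD1 eq_sym Hbs xs1.
    have ltN := ltn_ord xs.
    case/or3P: (redP i2 Hi2) => [/existsP [j /forallP Hj]|/forallP Hj|].
    + by have := Hj xs; rewrite xs2 /= => /(inC_notW (ltn_ord j)); rewrite xsW.
    + by have := Hj xs; rewrite xs2 /= => /inB_notW; rewrite xsW.
    case/existsP => b2 /andP [Hb2 /and3P [Hb2B HW2 HE2]].
    have xsb2 : xs != b2.
      by apply/eqP => Exb; move: Hb2B; rewrite -Exb => /inB_notW; rewrite xsW.
    pose ws : 'I_T := Ordinal (inW_lt xsW).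
    have Hint : wset (e1 :\ b) :&: wset (e2 :\ b2) = [set ws].
      apply/setP => w; rewrite !inE; apply/andP/eqP.
      * case=> /existsP [v1 /andP [Hv1 /eqP E1]] /existsP [v2 /andP [Hv2 /eqP E2]].
        have v12 : v1 = v2 by apply: val_inj; rewrite /= E1 E2.
        subst v2.
        move: Hv1 Hv2; rewrite !in_setD1 => /andP [_ /imsetP [y1 Hy1 Ey1]] /andP [_ /imsetP [y2 Hy2 Ey2]].
        have y12 : y1 = y2 by apply: finj; rewrite -Ey1 -Ey2.
        subst y2.
        have := Huniq y1 Hy1 Hy2 => Ey.
        apply: val_inj => /=; rewrite Ey1 Ey in E1; by rewrite E1 addKn.
      * move=> ->; split; apply/existsP; exists xs.
        - by rewrite in_setD1 eq_sym Hbs xs1 /=; apply/eqP; rewrite /= subnKC.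
        - by rewrite in_setD1 xsb2 xs2 /=; apply/eqP; rewrite /= subnKC.
    case: (eqVneq (wset (e1 :\ b)) (wset (e2 :\ b2))) => [Heq|Hne].
    + move: Hint; rewrite Heq setIid => Hs1.
      have := HEu HE2; rewrite Hs1 cards1 => H1; by rewrite -H1 in K2.
    + have := HE1 HE1' HE2 Hne; by rewrite Hint cards1.
  have internal : forall i, 0 < i -> i.+1 < q -> type2 (f @: P i).
    case => [//|j] _ Hj.
    have Hm : j.+3 * (k - 1) <= q * (k - 1) by apply: leq_mul.
    rewrite !mulSn in Hm.
    have Hs1 : j.+1 * (k - 1) < n by rewrite mulSn; clear - Hm Hq K2; lia.
    have Hs2 : j.+2 * (k - 1) < n by rewrite !mulSn; clear - Hm Hq K2; lia.
    case/or3P: (redP j.+1 (ltnW Hj)) => [/existsP [j' /forallP Hj']|//|H3].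
    + have := Hj' (f (insubd x0 (j.+1 * (k - 1)))).
      rewrite imset_f; last by rewrite (memP _ _ Hs1) leqnn leq_addr.
      move=> /= /(inC_lt (ltn_ord j')); have := Hge _ Hs1; rewrite /fv => A B.
      by move: (leq_ltn_trans A B); rewrite ltnn.
    + exfalso; move: (H3) => /existsP [b /andP [Hb /and3P [HbB HW HE']]].
      case/imsetP: (Hb) => y Hy Eb.
      case: (eqVneq y (insubd x0 (j.+2 * (k - 1)))) => [Ey|Ney].
      * have m1 : insubd x0 (j.+1 * (k - 1)) \in P j.+1.
          by rewrite (memP _ _ Hs1) leqnn leq_addr.
        have m2 : insubd x0 (j.+1 * (k - 1)) \in P j.
          by rewrite (memP _ _ Hs1) mulSn; clear; lia.
        have u : forall y', y' \in P j.+1 -> y' \in P j -> y' = insubd x0 (j.+1 * (k - 1)).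
          move=> y' A1 A2; rewrite !inE in A1 A2; apply: val_inj => /=; rewrite val_insubd Hs1.
          rewrite !mulSn in A1 A2 *; clear - A1 A2; lia.
        have bne : b != f (insubd x0 (j.+1 * (k - 1))).
          rewrite Eb (inj_eq finj) Ey; apply/eqP => /(congr1 val); rewrite !val_insubd Hs1 Hs2 !mulSn.
          clear - K2; lia.
        exact: (nbl j.+1 j (j.+1 * (k - 1)) (ltnW Hj) (ltnW (ltnW Hj)) Hs1 m1 m2 u H3 b Hb HbB HW HE' bne).
      * have m1 : insubd x0 (j.+2 * (k - 1)) \in P j.+1.
          by rewrite (memP _ _ Hs2) !mulSn; clear; lia.
        have m2 : insubd x0 (j.+2 * (k - 1)) \in P j.+2.
          by rewrite (memP _ _ Hs2) leqnn leq_addr.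
        have u : forall y', y' \in P j.+1 -> y' \in P j.+2 -> y' = insubd x0 (j.+2 * (k - 1)).
          move=> y' A1 A2; rewrite !inE in A1 A2; apply: val_inj => /=; rewrite val_insubd Hs2.
          rewrite !mulSn in A1 A2 *; clear - A1 A2; lia.
        have bne : b != f (insubd x0 (j.+2 * (k - 1))) by rewrite Eb (inj_eq finj).
        exact: (nbl j.+1 j.+2 (j.+2 * (k - 1)) (ltnW Hj) Hj Hs2 m1 m2 u H3 b Hb HbB HW HE' bne).
  have Hmid : forall x, k - 1 <= x <= (q - 1) * (k - 1) -> inB (fv x).
    move=> x Hx.
    have Hxn : x < n by move: Hx; rewrite mulnBl mul1n; clear - Hq; lia.
    have [i [Hi0 Hi1 Hxi]] : exists i, [/\ 0 < i, i.+1 < q & insubd x0 x \in P i].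
      case: (ltnP x ((q - 1) * (k - 1))) => Hlt.
      * exists (x %/ (k - 1)); split.
        -- rewrite divn_gt0; last by clear - K2; lia.
           by case/andP: Hx.
        -- have H : x %/ (k - 1) < q - 1.
             by rewrite ltn_divLR; [exact: Hlt | clear - K2; lia].
           clear - H q3; lia.
        -- rewrite (memP _ _ Hxn); have A := leq_divM x (k - 1).
           have B := ltn_ceil x (ltnW K2); rewrite mulSn in B; clear - A B; lia.
      * exists (q - 2); split; [clear - q3; lia | clear - q3; lia |].
        rewrite (memP _ _ Hxn); move: Hx Hlt; rewrite !mulnBl !mul1n; clear - q3K; lia.
    have := forallP (internal i Hi0 Hi1) (f (insubd x0 x)).
    by rewrite imset_f.
  have U : uniq (map fv (iota (k - 1) ((q - 2) * (k - 1) + 1))).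
    rewrite map_inj_in_uniq ?iota_uniq //.
    move=> x y; rewrite !mem_iota mulnBl => Hx Hy; apply: fv_inj; clear - Hx Hy Hq q3K; lia.
  have : size (map fv (iota (k - 1) ((q - 2) * (k - 1) + 1))) <= size (iota base (n - 2 * k + 1)).
    apply: uniq_leq_size U _.
    move=> v /mapP [x]; rewrite mem_iota => Hx ->; rewrite mem_iota.
    have Hx' : k - 1 <= x <= (q - 1) * (k - 1).
      by move: Hx; rewrite !mulnBl mul1n; clear - q3K; lia.
    exact: Hmid x Hx'.
  rewrite size_map !size_iota mulnBl; clear - Hq K2 q3K; lia.
Qed.
Lemma card_wset (S : {set 'I_N}) : (forall v, v \in S -> inW v) -> #|wset S| = #|S|.
Proof.
move=> H; rewrite !cardE.
have U1 : uniq (map (fun w : 'I_T => nat_of_ord w) (enum (wset S))).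
  by rewrite map_inj_uniq ?enum_uniq //; exact: val_inj.
have U2 : uniq (map (fun v : 'I_N => nat_of_ord v - wb) (enum S)).
  rewrite map_inj_in_uniq ?enum_uniq // => u v; rewrite !mem_enum => Hu Hv Euv.
  apply: val_inj => /=; move: Euv (H u Hu) (H v Hv); rewrite /inW /=; clear; lia.
have Pm : perm_eq (map (fun w : 'I_T => nat_of_ord w) (enum (wset S)))
                  (map (fun v : 'I_N => nat_of_ord v - wb) (enum S)).
  apply: uniq_perm U1 U2 _ => m; apply/mapP/mapP.
  - case=> w; rewrite mem_enum inE => /existsP [v /andP [vS /eqP Ev]] ->.
    exists v; first by rewrite mem_enum.
    lia.
  - case=> v; rewrite mem_enum => vS ->.
    have Hlt : v - wb < T by have := H v vS; have := ltn_ord v; rewrite /inW; lia.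
    exists (Ordinal Hlt) => //.
    rewrite mem_enum inE; apply/existsP; exists v; rewrite vS /=.
    by apply/eqP; have := H v vS; rewrite /inW; lia.
by have := perm_size Pm; rewrite !size_map.
Qed.

Variables (a : 'I_chi -> nat) (t : nat).
Hypotheses (Ha : forall i : 'I_chi, i < chi - 1 -> (chi - 1) * (k - 2) + T < a i)
  (Ht : forall i : 'I_chi, i = chi - 1 :> nat -> a i = t)
  (Hkt : k - 1 <= t) (HEi : indep_num E < t).

Lemma card_part i : #|part a i| = a i.
Proof.
have -> : part a i = [set Tagged (fun j => 'I_(a j)) y | y : 'I_(a i)].
  apply/setP => -[j y]; rewrite inE /=; apply/eqP/imsetP.
  - by move=> Eji; subst j; exists y.
  - by case=> z _ Ez; have := congr1 tag Ez.
rewrite card_imset ?card_ord // => y1 y2 E12.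
have := congr1 (tagged_as (Tagged (fun j => 'I_(a j)) y1)) E12.
by rewrite !tagged_asE.
Qed.

Lemma edge_mk i (S : {set part_vertex a}) x :
  S \subset part a i -> #|S| = k - 1 -> tag x != i -> x |: S \in H_graph k a.
Proof.
move=> Sp cS Hx.
have xS : x \notin S by apply/negP => /(subsetP Sp); rewrite inE (negbTE Hx).
rewrite inE cardsU1 xS cS /=; apply/andP; split; first by apply/eqP; lia.
apply/existsP; exists i.
rewrite setIUl (setIidPl Sp).
have -> : [set x] :&: part a i = set0.
  apply/setP => y; rewrite !inE; case: eqP => // ->; by rewrite (negbTE Hx).
by rewrite set0U cS.
Qed.

Definition zone (j : 'I_(chi - 1)) (v : nat) := if j < chi - 2 then inC j v else inB v.

Lemma zone_red j (e : {set 'I_N}) : (forall v, v \in e -> zone j v) -> red e.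
Proof.
move=> He; rewrite /red; case: (ltnP j (chi - 2)) => Hj.
- apply/or3P; apply: Or31; apply/existsP; exists (Ordinal Hj).
  apply/forallP => v; apply/implyP => /He; by rewrite /zone Hj.
- apply/or3P; apply: Or32; apply/forallP => v; apply/implyP => /He.
  by rewrite /zone ltnNge Hj.
Qed.

Lemma zone_or_W (v : 'I_N) : inW v \/ exists j, zone j v.
Proof.
have L0 : 0 < n - 1 by lia.
case: (ltnP v base) => hv1.
- right.
  have hj : v %/ (n - 1) < chi - 1.
    have : v %/ (n - 1) < chi - 2 by rewrite ltn_divLR; lia.
    lia.
  exists (Ordinal hj); rewrite /zone /=.
  have -> : v %/ (n - 1) < chi - 2 by rewrite ltn_divLR; lia.
  rewrite /inC; have := leq_divM v (n - 1); have := ltn_ceil v L0; rewrite mulSn; lia.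
- case: (ltnP v wb) => hv2; last by left.
  right; have hj : chi - 2 < chi - 1 by lia.
  exists (Ordinal hj); rewrite /zone /= ltnn /inB; lia.
Qed.

Lemma no_blue_H (g : part_vertex a -> 'I_N) : injective g ->
  (forall e, e \in H_graph k a -> red (g @: e) = false) -> False.
Proof.
move=> ginj Hg.
pose Z i j := [set x in part a i | zone j (g x)].
pose claim i j := k - 1 <= #|Z i j|.
have excl : forall i j x, claim i j -> tag x != i -> zone j (g x) -> False.
  move=> i j x Hc Hx Hz.
  case: (exists_subset Hc) => S SZ cS.
  have Sp : S \subset part a i.
    by apply/subsetP => y /(subsetP SZ); rewrite inE => /andP [].
  have He := edge_mk Sp cS Hx.
  have := Hg _ He; rewrite (@zone_red j) //.
  move=> v /imsetP [y]; rewrite in_setU1 => /orP [/eqP -> -> //|yS ->].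
  by have := subsetP SZ y yS; rewrite inE => /andP [].
have Wle : forall S : {set part_vertex a}, (forall x, x \in S -> inW (g x)) -> #|S| <= T.
  move=> S HS; rewrite -(card_imset _ ginj) -card_wset.
  - by apply: leq_trans (max_card _) _; rewrite card_ord.
  - by move=> v /imsetP [x xS ->]; exact: HS.
have claims : forall i : 'I_chi, i < chi - 1 -> exists j, claim i j.
  move=> i Hi; case: (boolP [exists j, claim i j]) => [/existsP //|/existsPn Hnc]; exfalso.
  pose Wp := [set x in part a i | inW (g x)].
  have cover : part a i \subset (\bigcup_(j < chi - 1) Z i j) :|: Wp.
    apply/subsetP => x xp; rewrite inE; case: (zone_or_W (g x)) => [hW|[j hj]].
    + by apply/orP; right; rewrite inE xp hW.
    + by apply/orP; left; apply/bigcupP; exists j => //; rewrite inE xp hj.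
  have c1 := subset_leq_card cover.
  have c2 : #|Wp| <= T by apply: Wle => x; rewrite inE => /andP [].
  have c3 := card_bigcup_leq (fun j => Z i j).
  have c4 : \sum_(j < chi - 1) #|Z i j| <= \sum_(j < chi - 1) (k - 2).
    by apply: leq_sum => j _; have := Hnc j; rewrite /claim; lia.
  rewrite big_const_ord iter_addn_0 in c4.
  have := Ha Hi; rewrite card_part in c1.
  have := leq_card_setU (\bigcup_(j < chi - 1) Z i j) Wp => -[c5 _].
  rewrite mulnC in c4; lia.
have hB : chi - 2 < chi - 1 by lia.
pose jB : 'I_(chi - 1) := Ordinal hB.
pose w (i' : 'I_(chi - 1)) : 'I_chi := widen_ord (leq_subr 1 chi) i'.
pose h (i' : 'I_(chi - 1)) := odflt jB [pick j | claim (w i') j].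
have hP : forall i', claim (w i') (h i').
  move=> i'; rewrite /h; case: pickP => [j Hj //|Hnp]; exfalso.
  case: (claims (w i') (ltn_ord i')) => j Hj.
  by have := Hnp j; rewrite /= Hj.
have nonempty : forall i j, claim i j -> exists x, x \in Z i j.
  move=> i j Hc; have : 0 < #|Z i j| by move: Hc; rewrite /claim; lia.
  by rewrite card_gt0 => /set0Pn.
have hinj : injective h.
  move=> i1 i2 E12; apply/eqP; apply/negPn/negP => ne.
  case: (nonempty _ _ (hP i2)) => x; rewrite inE => /andP [xp xz].
  apply: (excl (w i1) (h i1) x (hP i1)).
  - rewrite inE in xp; rewrite (eqP xp); apply/negP => /eqP /(congr1 val) /=.
    by move=> /val_inj /eqP; rewrite eq_sym (negbTE ne).
  - by rewrite E12.
have hsurj : forall j, exists i', h i' = j.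
  move=> j; have := inj_card_onto hinj (leqnn _) j.
  by case/codomP => i' ->; exists i'.
have hl : chi - 1 < chi by lia.
pose lastI : 'I_chi := Ordinal hl.
have lastW : forall y, y \in part a lastI -> inW (g y).
  move=> y yp; case: (zone_or_W (g y)) => [//|[j hj]]; exfalso.
  case: (hsurj j) => i' hi'.
  apply: (excl (w i') j y) => //; first by rewrite -hi'.
  rewrite inE in yp; rewrite (eqP yp); apply/negP => /eqP /(congr1 val) /=.
  by have := ltn_ord i'; lia.
pose S' := wset (g @: part a lastI).
have cS' : #|S'| = t.
  rewrite card_wset; first by rewrite card_imset // card_part Ht.
  by move=> v /imsetP [y yp ->]; exact: lastW.
have : ~~ indep E S'.
  apply/negP => Hind; have H := leq_bigmax_cond (F := fun S : {set 'I_T} => #|S|) S' Hind.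
  rewrite cS' in H; move: (leq_ltn_trans H HEi); by rewrite ltnn.
rewrite /indep negb_forall => /existsP [eF]; rewrite negb_imply negbK => /andP [eFE eFS].
pose e' := [set y in part a lastI | [exists w0 in eF, nat_of_ord (g y) == wb + w0]].
have e'p : e' \subset part a lastI by apply/subsetP => y; rewrite inE => /andP [].
have e'W : forall v, v \in g @: e' -> inW v.
  by move=> v /imsetP [y /(subsetP e'p) yp ->]; exact: lastW.
have wsE : wset (g @: e') = eF.
  apply/setP => w0; rewrite inE; apply/existsP/idP.
  - case=> v /andP [/imsetP [y]]; rewrite inE => /andP [_ /existsP [w1 /andP [w1F /eqP E1]]] -> /eqP E2.
    have -> : w0 = w1 by apply: val_inj => /=; move: E1 E2; clear; lia.
    exact: w1F.
  - move=> w0F; have := subsetP eFS w0 w0F; rewrite inE => /existsP [v /andP [/imsetP [y yp ->] Ev]].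
    exists (g y); rewrite imset_f ?Ev //.
    by rewrite inE yp; apply/existsP; exists w0; rewrite w0F Ev.
have ce' : #|e'| = k - 1.
  by rewrite -(card_imset _ ginj) -card_wset // wsE HEu.
case: (hsurj jB) => iB hBi.
case: (nonempty _ _ (hP iB)) => x; rewrite hBi inE => /andP [xp xz].
have xB : inB (g x) by move: xz; rewrite /zone /= ltnn.
have xl : tag x != lastI.
  rewrite inE in xp; rewrite (eqP xp); apply/negP => /eqP /(congr1 val) /=.
  by have := ltn_ord iB; lia.
have He := edge_mk e'p ce' xl.
have := Hg _ He; move/negbT/negP; apply.
rewrite /red; apply/or3P; apply: Or33; apply/existsP; exists (g x).
have Hx' : g x \notin g @: e'.
  apply/negP => /e'W H; by move: (inB_notW xB); rewrite H.
rewrite imsetU1 setU11 /= (setU1K Hx') wsE eFE; apply/and3P; split => //.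
by apply/forallP => v; apply/implyP; exact: e'W.
Qed.

Lemma not_arrows (Hmod : n = 1 %[mod k - 1]) :
  ~ ramsey_arrows (loose_path k n) (H_graph k a) N.
Proof.
move=> Har; case: (Har red) => [[f [finj Hf]]|[g [ginj Hg]]].
- exact: (no_red_path Hmod finj Hf).
- exact: (no_blue_H ginj Hg).
Qed.
End Constr.

Theorem proposition1p8 (k chi t n T : nat) (a : 'I_chi -> nat) :
  3 <= k -> 2 <= chi -> k - 1 <= t -> 3 * (k - 1) <= n ->
  n = 1 %[mod k - 1] ->
  is_tau (k - 1) t T ->
  (forall i : 'I_chi, i < chi - 1 -> (chi - 1) * (k - 2) + T < a i) ->
  (forall i : 'I_chi, i = chi - 1 :> nat -> a i = t) ->
  forall N, ramsey_arrows (loose_path k n) (H_graph k a) N ->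
    (chi - 1) * (n - 1) + T + 3 - 2 * k <= N.
Proof.
move=> Hk Hchi Hkt Hn Hmod [[E [HEu HEi HE1]] _] Ha Ht N Har.
rewrite leqNgt; apply/negP => HltN.
have HN : N <= (chi - 2) * (n - 1) + (n - 2 * k + 1) + T.
  have E1 : chi - 1 = (chi - 2).+1 by clear - Hchi; lia.
  rewrite E1 mulSn in HltN; clear - HltN Hk Hn; lia.
exact: (not_arrows Hk Hchi Hn HN HEu HE1 Ha Ht Hkt HEi Hmod Har).
Qed.
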